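(* Let $\rho=3-2\sqrt2$, let $g$, $b_0,b_1,b_2$ be as in the context, let $B(x)=b_0+b_1x+b_2x^2$, and fix $\varphi\in(0,\pi)$. For $n\ge1$ let $\mathcal{S}(n)=\{\rho+(\rho/n)e^{i\theta}:\varphi\le|\theta|\le\pi\}$, an arc of the circle $|z-\rho|=\rho/n$ (with either orientation). Then for all integers $n\ge5$, \[\left|\frac{1}{2\pi i}\int_{\mathcal{S}(n)}\frac{g(z)}{z^{n+1}}\,dz\right|\le\rho^{-n}n^2\,\frac{4}{\rho^3}\,B(\pi+\log n).\]
   Context: Let $(d_n)_{n\ge0}$ be the rational sequence with $(d_0,\dots,d_6)=(72,1932,31248,\frac{790101}{2},\frac{17208645}{4},\frac{338898609}{8},\frac{1551478257}{4})$ satisfying $\sum_{k=0}^7 r_k(n)d_{n+k}=0$ for all $n\ge0$, where $r_0(n) = -(n+8)(n+7)(n+6)^2(12232n^3+298144n^2+2412586n+6469077)$, $r_1(n) = (n+8)(183480n^6+7655560n^5+131977142n^4+1202876299n^3+6112196895n^2+16418149668n+18219511026)$, $r_2(n) = -(n+8)(941864n^6+38326904n^5+644300514n^4+5727711699n^3+28407144241n^2+74557779538n+80949464718)$, $r_3(n) = 1993816n^7+97303624n^6+2021855198n^5+23184921987n^4+158457515673n^3+645518710454n^2+1451619424860n+1390493835900$, $r_4(n) = -1993816n^7-98090344n^6-2054897438n^5-23758375953n^4-163720428321n^3-672459054524n^2-1524577250976n-1472211879228$, $r_5(n) = (n+6)(941864n^6+40789672n^5+730497394n^4+6921881565n^3+36590122947n^2+102300885158n+118218544398)$,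 $r_6(n) = (n+6)(183480n^6+7756760n^5+135519142n^4+1252328453n^3+6456460129n^2+17612930492n+19872693550)$, $r_7(n) = (n+7)(n+6)(n+8)^2(12232n^3+215600n^2+1256970n+2435511)$. Let $f(z)=\sum_{n\ge0}d_nz^n$; it extends analytically to $\Delta=\{z:|z|<1\}\setminus[\rho,1]$. With the principal branch of $\log$ and $L(z)=\log\frac{1}{1-z/\rho}$, on $\Delta\cap\{|z-\rho|<\rho\}$ one has the unique decomposition $f(z)=C_1(z-\rho)^{-4}+C_2(z-\rho)^{-4}L(z)+(z-\rho)^{-3}(h_0(z)+h_1(z)L(z)+h_2(z)L(z)^2)$ with real constants $C_1,C_2$ and $h_0,h_1,h_2$ analytic on $|z-\rho|<\rho$. Let $\ell(z)=C_1(z-\rho)^{-4}+C_2(z-\rho)^{-4}L(z)$ and $g=f-\ell$. The constants $b_0\in[6.86\pm2.71\cdot10^{-4}]$, $b_1\in[2.85\pm3.20\cdot10^{-3}]$, $b_2\in[0.309\pm2.78\cdot10^{-4}]$ (where $[x\pm\epsilon]$ denotes $[x-\epsilon,x+\epsilon]$) satisfy $|h_j(z)|\le b_j$ for $j=0,1,2$ and all $|z-\rho|<1/8$. *)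

(* Defs.v *)
From Stdlib Require Import Reals.
From Coquelicot Require Import Coquelicot.
Open Scope R_scope.

Definition rho : R := 3 - 2 * sqrt 2.

Section Rec.
Variable n : R.
Definition r0 := -(n+8)*(n+7)*(n+6)^2*(12232*n^3+298144*n^2+2412586*n+6469077).
Definition r1 := (n+8)*(183480*n^6+7655560*n^5+131977142*n^4+1202876299*n^3+6112196895*n^2+16418149668*n+18219511026).
Definition r2 := -(n+8)*(941864*n^6+38326904*n^5+644300514*n^4+5727711699*n^3+28407144241*n^2+74557779538*n+80949464718).
Definition r3 := 1993816*n^7+97303624*n^6+2021855198*n^5+23184921987*n^4+158457515673*n^3+645518710454*n^2+1451619424860*n+1390493835900.
Definition r4 := -1993816*n^7-98090344*n^6-2054897438*n^5-23758375953*n^4-163720428321*n^3-672459054524*n^2-1524577250976*n-1472211879228.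
Definition r5 := (n+6)*(941864*n^6+40789672*n^5+730497394*n^4+6921881565*n^3+36590122947*n^2+102300885158*n+118218544398).
Definition r6 := (n+6)*(183480*n^6+7756760*n^5+135519142*n^4+1252328453*n^3+6456460129*n^2+17612930492*n+19872693550).
Definition r7 := (n+7)*(n+6)*(n+8)^2*(12232*n^3+215600*n^2+1256970*n+2435511).
End Rec.

Definition dstate_t : Type := (R * R * R * R * R * R * R)%type.

Definition dinit : dstate_t :=
  (72, 1932, 31248, 790101/2, 17208645/4, 338898609/8, 1551478257/4).

(** One step: from (d_m,...,d_{m+6}) to (d_{m+1},...,d_{m+7}), where d_{m+7} is
    determined by sum_{k=0}^7 r_k(m) d_{m+k} = 0 (note r_7(m) <> 0 for m >= 0). *)
Definition dstep (m : nat) (s : dstate_t) : dstate_t :=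
  let '(a0, a1, a2, a3, a4, a5, a6) := s in
  let x := INR m in
  (a1, a2, a3, a4, a5, a6,
   - (r0 x * a0 + r1 x * a1 + r2 x * a2 + r3 x * a3 + r4 x * a4
      + r5 x * a5 + r6 x * a6) / r7 x).

Fixpoint dstate (m : nat) : dstate_t :=
  match m with
  | O => dinit
  | S k => dstep k (dstate k)
  end.

Definition d (m : nat) : R := let '(a0, _, _, _, _, _, _) := dstate m in a0.

Definition cis (t : R) : C := (cos t, sin t).

(** Principal argument in (-pi, pi]. *)
Definition Arg (w : C) : R :=
  let x := fst w in let y := snd w in
  if Rlt_dec 0 x then atan (y / x)
  else if Rlt_dec 0 y then PI / 2 - atan (x / y)
  else if Rlt_dec y 0 then - (PI / 2) - atan (x / y)
  else if Rlt_dec x 0 then PI else 0.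

Definition Clog (w : C) : C := (ln (Cmod w), Arg w).

Definition Lfun (z : C) : C := Clog (Cinv (Cminus 1 (Cdiv z (RtoC rho)))).

Definition inDelta (z : C) : Prop :=
  Cmod z < 1 /\ ~ (Im z = 0 /\ rho <= Re z /\ Re z <= 1).

Definition CInt (f : R -> C) (a b : R) : C :=
  @RInt C_R_CompleteNormedModule f a b.

Definition arc_integral (G : C -> C) (n : nat) (phi : R) : C :=
  let gam t := Cplus (RtoC rho) (Cmult (RtoC (rho / INR n)) (cis t)) in
  let dgam t := Cmult (Ci : C) (Cmult (RtoC (rho / INR n)) (cis t)) in
  let integrand t := Cmult (G (gam t)) (dgam t) in
  Cplus (CInt integrand (- PI) (- phi)) (CInt integrand phi PI).

(* Main.v *)
Require Import Defs.
From Stdlib Require Import Reals Lra Lia Classical.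
From Coquelicot Require Import Coquelicot.
Open Scope R_scope.

Lemma Cmod_normR (x : C) : @norm _ C_R_NormedModule x = Cmod x.
Proof.
  destruct x as [a b]. unfold Cmod. simpl.
  unfold norm; simpl. unfold prod_norm; simpl. unfold norm; simpl. unfold abs; simpl. rewrite !Rmult_1_r. fold (Rsqr (Rabs a)) (Rsqr (Rabs b)). now rewrite <- !Rsqr_abs. Qed.

Lemma Lub_full (E : R -> Prop) : (forall x, E x) -> Lub_Rbar E = p_infty.
Proof.
  intros H. apply is_lub_Rbar_unique. split.
  - intros x _. simpl. exact I.
  - intros l Hl. destruct l as [r| |]; simpl; auto.
    + specialize (Hl (r+1) (H _)). simpl in Hl. lra.
    + specialize (Hl 0 (H _)). simpl in Hl. exact Hl.
Qed.

Lemma CInt_bound (f : R -> C) (a b M : R) : a <= b -> 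
  (forall x, a <= x <= b -> Cmod (f x) <= M) -> 0 <= M ->
  Cmod (CInt f a b) <= (b - a) * M.
Proof.
  intros Hab Hf HM. destruct (classic (exists l, is_RInt (V:=C_R_CompleteNormedModule) f a b l)) as [[l Hl]|Hn].
  - unfold CInt. rewrite (is_RInt_unique _ _ _ _ Hl). rewrite <- Cmod_normR.
    apply (norm_RInt_le_const f a b l M Hab); auto. intros; rewrite Cmod_normR; auto.
  - assert (E : CInt f a b = (0,0)).
    { unfold CInt, RInt, iota, lim. simpl. unfold C_complete_lim, R_complete_lim.
      rewrite !Lub_full; auto.
      all: intros x y Hy; exfalso; apply Hn; eauto. }
    rewrite E. change (0,0) with (RtoC 0). rewrite Cmod_0. apply Rmult_le_pos; lra.
Qed.

Lemma rho_bounds : 0.17 < rho < 0.172.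
Proof.
  unfold rho. pose proof (sqrt_sqrt 2 ltac:(lra)). pose proof (sqrt_pos 2). nra.
Qed.

Lemma u_eq (n : R) (t : R) : n <> 0 ->
  Cminus 1 (Cdiv (Cplus (RtoC rho) (Cmult (RtoC (rho / n)) (cis t))) (RtoC rho))
  = (- cos t / n, - sin t / n).
Proof.
  intros Hn. pose proof rho_bounds. unfold cis, Cminus, Cdiv, Cplus, Cmult, Cinv, RtoC, Copp; simpl.
  apply injective_projections; simpl; field; lra.
Qed.

Lemma Cmod_cis t : Cmod (cis t) = 1.
Proof.
  unfold Cmod, cis; simpl. replace (cos t * (cos t * 1) + sin t * (sin t * 1)) with 1.
  apply sqrt_1. pose proof (sin2_cos2 t). unfold Rsqr in H. lra.
Qed.

Lemma Cmod_pair_le a b : Cmod (a, b) <= Rabs a + Rabs b.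
Proof.
  unfold Cmod; simpl. rewrite <- (sqrt_pow2 (Rabs a + Rabs b)).
  2: pose proof (Rabs_pos a); pose proof (Rabs_pos b); lra.
  apply sqrt_le_1_alt. pose proof (Rabs_pos a); pose proof (Rabs_pos b).
  replace (a * (a * 1)) with (Rabs a * Rabs a) by (rewrite <- Rabs_mult; rewrite Rabs_pos_eq; [ring| nra]).
  replace (b * (b * 1)) with (Rabs b * Rabs b) by (rewrite <- Rabs_mult; rewrite Rabs_pos_eq; [ring| nra]).
  nra.
Qed.

Lemma Arg_bound w : Rabs (Arg w) <= PI.
Proof.
  pose proof PI_RGT_0. unfold Arg.
  destruct (Rlt_dec 0 (fst w)); [|destruct (Rlt_dec 0 (snd w)); [|destruct (Rlt_dec (snd w) 0); [|destruct (Rlt_dec (fst w) 0)]]];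
  apply Rabs_le;
  try (match goal with |- context [atan ?a] => pose proof (atan_bound a) end); lra.
Qed.

Lemma Lfun_bound (n : nat) t : 5 <= INR n ->
  Cmod (Lfun (Cplus (RtoC rho) (Cmult (RtoC (rho / INR n)) (cis t)))) <= ln (INR n) + PI.
Proof.
  intros Hn. unfold Lfun. rewrite u_eq by lra.
  assert (E : ((- cos t / INR n, - sin t / INR n) : C) = Cmult (RtoC (- / INR n)) (cis t)).
  { unfold Cmult, RtoC, cis; apply injective_projections; simpl; field; lra. }
  rewrite E. clear E.
  assert (Hm : Cmod (Cmult (RtoC (- / INR n)) (cis t)) = / INR n).
  { rewrite Cmod_mult, Cmod_cis, Cmod_R, Rabs_Ropp, Rabs_pos_eq. ring.
    apply Rlt_le, Rinv_0_lt_compat; lra. }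
  assert (Hnz : Cmult (RtoC (- / INR n)) (cis t) <> 0%C).
  { intro H0. rewrite H0, Cmod_0 in Hm. assert (0 < / INR n) by (apply Rinv_0_lt_compat; lra). lra. }
  unfold Clog. eapply Rle_trans. apply Cmod_pair_le.
  rewrite Cmod_inv by exact Hnz. rewrite Hm, Rinv_inv.
  pose proof (Arg_bound (Cinv (Cmult (RtoC (- / INR n)) (cis t)))).
  rewrite Rabs_pos_eq. lra.
  rewrite <- ln_1. apply ln_le; lra.
Qed.

Lemma bern (t : R) (k : nat) : 0 <= t -> 1 + INR k * t <= (1 + t) ^ k.
Proof.
  intros Ht. induction k.
  - simpl; lra.
  - rewrite S_INR. simpl. assert (0 <= INR k) by apply pos_INR.
    assert (0 <= INR k * t * t) by (apply Rmult_le_pos; [apply Rmult_le_pos|]; lra). nra.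
Qed.

Lemma powbound (n : nat) : (5 <= n)%nat -> / 4 <= (1 - / INR n) ^ (S n).
Proof.
  induction n as [|n IH]; intros Hn.
  - lia.
  - destruct (Nat.eq_dec n 4) as [->|Hne].
    + simpl. lra.
    + assert (H5 : (5 <= n)%nat) by lia. specialize (IH H5).
      assert (Hx : 5 <= INR n) by (apply (le_INR 5) in H5; simpl in H5; lra).
      rewrite S_INR. set (x := INR n) in *.
      set (a := 1 - / x) in *. set (t := / (x*x - 1)).
      assert (Hb : 1 - / (x + 1) = a * (1 + t)).
      { unfold a, t. field. split; nra. }
      rewrite Hb. rewrite Rpow_mult_distr.
      assert (Ht : 0 <= t) by (unfold t; apply Rlt_le, Rinv_0_lt_compat; nra).
      pose proof (bern t (S (S n)) Ht) as B.
      rewrite !S_INR in B. fold x in B.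
      assert (K : 1 <= 1 + (x + 1 + 1) * t).
      { nra. }
      assert (Ha : 0 <= a ^ S n) by (eapply Rle_trans; [|exact IH]; lra).
      replace (a ^ S (S n)) with (a * a ^ S n) by reflexivity.
      assert (Kb : 1 <= a * (1 + (x + 1 + 1) * t)).
      { unfold a, t. apply (Rmult_le_reg_r ((x*x-1)*x)). nra.
        field_simplify. lra. split; nra. }
      assert (a * (1 + (x+1+1)*t) <= a * (1+t)^ S (S n)).
      { apply Rmult_le_compat_l. unfold a. assert (/ x < 1) by (rewrite <- Rinv_1; apply Rinv_lt_contravar; lra). lra. lra. }
      set (P := a ^ S n) in *. set (Q := (1+t) ^ S (S n)) in *.
      replace (a * P * Q) with (P * (a * Q)) by ring.
      apply Rle_trans with (P * 1). lra.
      apply Rmult_le_compat_l; lra.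
Qed.

Lemma Cminus_Cplus_l (a b : C) : Cminus (Cplus a b) a = b.
Proof. destruct a, b. unfold Cminus, Cplus, Copp; apply injective_projections; simpl; ring. Qed.

Lemma pointwise (F h0 h1 h2 : C -> C) (C1 C2 b0 b1 b2 phi : R) (n : nat) (t : R) :
  (forall z : C, inDelta z -> Cmod (Cminus z (RtoC rho)) < rho ->
     F z = Cplus (Cplus
             (Cdiv (RtoC C1) (Cpow (Cminus z (RtoC rho)) 4))
             (Cdiv (Cmult (RtoC C2) (Lfun z)) (Cpow (Cminus z (RtoC rho)) 4)))
           (Cdiv (Cplus (Cplus (h0 z) (Cmult (h1 z) (Lfun z)))
                        (Cmult (h2 z) (Cpow (Lfun z) 2)))
                 (Cpow (Cminus z (RtoC rho)) 3))) ->
  (forall z : C, Cmod (Cminus z (RtoC rho)) < 1/8 ->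
     Cmod (h0 z) <= b0 /\ Cmod (h1 z) <= b1 /\ Cmod (h2 z) <= b2) ->
  0 < phi < PI -> (5 <= n)%nat ->
  (phi <= t <= PI \/ - PI <= t <= - phi) ->
  let g := fun z : C =>
    Cminus (F z)
      (Cplus (Cdiv (RtoC C1) (Cpow (Cminus z (RtoC rho)) 4))
             (Cdiv (Cmult (RtoC C2) (Lfun z)) (Cpow (Cminus z (RtoC rho)) 4))) in
  let B := fun x : R => b0 + b1 * x + b2 * x ^ 2 in
  let r := rho / INR n in
  let z := Cplus (RtoC rho) (Cmult (RtoC r) (cis t)) in
  Cmod (Cmult (Cdiv (g z) (Cpow z (S n))) (Cmult Ci (Cmult (RtoC r) (cis t))))
   <= / rho ^ n * (INR n) ^ 2 * (4 / rho ^ 3) * B (PI + ln (INR n)).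
Proof.
  intros Hdec Hh Hphi Hn Ht g B r z.
  pose proof rho_bounds as Hrho. pose proof PI_RGT_0 as HPI.
  assert (Hx : 5 <= INR n) by (apply (le_INR 5) in Hn; simpl in Hn; lra).
  set (x := INR n) in *.
  assert (Hr : 0 < r /\ r <= rho / 5).
  { unfold r. split. apply Rdiv_lt_0_compat; lra.
    apply Rmult_le_compat_l. lra. apply Rinv_le_contravar; lra. }
  assert (Hzr : Cminus z (RtoC rho) = Cmult (RtoC r) (cis t)).
  { unfold z, Cminus, Cplus, Copp, Cmult, RtoC, cis. apply injective_projections; simpl; ring. }
  assert (Hrc : Cmod (Cmult (RtoC r) (cis t)) = r).
  { rewrite Cmod_mult, Cmod_cis, Cmod_R, Rabs_pos_eq; lra. }
  assert (Hmzr : Cmod (Cminus z (RtoC rho)) = r) by (rewrite Hzr; exact Hrc).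
  assert (Hzlow : rho - r <= Cmod z).
  { assert (E : RtoC rho = Cplus z (Copp (Cmult (RtoC r) (cis t)))).
    { unfold z, Cminus, Cplus, Copp, Cmult, RtoC, cis. apply injective_projections; simpl; ring. }
    pose proof (Cmod_triangle z (Copp (Cmult (RtoC r) (cis t)))) as T.
    rewrite <- E, Cmod_opp, Hrc, Cmod_R, Rabs_pos_eq in T; lra. }
  assert (Hzup : Cmod z <= rho + r).
  { pose proof (Cmod_triangle (RtoC rho) (Cmult (RtoC r) (cis t))) as T.
    fold z in T. rewrite Hrc, Cmod_R, Rabs_pos_eq in T; lra. }
  assert (HD : inDelta z).
  { split. lra.
    unfold z, Cplus, Cmult, RtoC, cis, Im, Re; simpl. intros [Him [Hre _]].
    destruct Ht as [Ht|Ht].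
    - destruct (Rlt_le_dec t PI) as [Hl|Hl].
      + assert (0 < sin t) by (apply sin_gt_0; lra).
        assert (0 < r * sin t) by (apply Rmult_lt_0_compat; lra). lra.
      + assert (t = PI) by lra. subst t. rewrite cos_PI, sin_PI in *. lra.
    - destruct (Rlt_le_dec (- PI) t) as [Hl|Hl].
      + assert (0 < sin (- t)) by (apply sin_gt_0; lra). rewrite sin_neg in H.
        assert (0 < r * (- sin t)) by (apply Rmult_lt_0_compat; lra). lra.
      + assert (t = - PI) by lra. subst t. rewrite cos_neg, sin_neg, cos_PI, sin_PI in *. lra. }
  specialize (Hdec z HD ltac:(lra)).
  assert (Hg : g z = Cdiv (Cplus (Cplus (h0 z) (Cmult (h1 z) (Lfun z)))
                        (Cmult (h2 z) (Cpow (Lfun z) 2)))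
                 (Cpow (Cminus z (RtoC rho)) 3)).
  { unfold g. rewrite Hdec. apply Cminus_Cplus_l. }
  destruct (Hh z ltac:(lra)) as [H0 [H1 H2]].
  pose proof (Lfun_bound n t Hx) as HL. fold x r z in HL.
  set (X := PI + ln x) in *.
  assert (Hlnx : 0 <= ln x) by (rewrite <- ln_1; apply ln_le; lra).
  assert (HX : Cmod (Lfun z) <= X) by (unfold X; lra).
  assert (HLp := Cmod_ge_0 (Lfun z)).
  assert (Hnum : Cmod (Cplus (Cplus (h0 z) (Cmult (h1 z) (Lfun z)))
                        (Cmult (h2 z) (Cpow (Lfun z) 2))) <= B X).
  { unfold B. eapply Rle_trans. apply Cmod_triangle.
    rewrite Cmod_mult, Cmod_pow.
    eapply Rle_trans. apply Rplus_le_compat_r. apply Cmod_triangle.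
    rewrite Cmod_mult.
    pose proof (Cmod_ge_0 (h0 z)). pose proof (Cmod_ge_0 (h1 z)). pose proof (Cmod_ge_0 (h2 z)).
    apply Rplus_le_compat. apply Rplus_le_compat. lra.
    apply Rmult_le_compat; lra.
    apply Rmult_le_compat; try lra. apply pow_le; lra. apply pow_incr; lra. }
  assert (HBX : 0 <= B X).
  { eapply Rle_trans. 2: exact Hnum. apply Cmod_ge_0. }
  assert (Hpow3 : Cmod (Cpow (Cminus z (RtoC rho)) 3) = r ^ 3) by (rewrite Cmod_pow, Hmzr; ring).
  assert (Hnz3 : Cpow (Cminus z (RtoC rho)) 3 <> 0%C).
  { intro E. rewrite E, Cmod_0 in Hpow3. assert (0 < r ^ 3) by (apply pow_lt; lra). lra. }
  assert (HG : Cmod (g z) <= B X / r ^ 3).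
  { rewrite Hg, Cmod_div, Hpow3 by exact Hnz3. unfold Rdiv. apply Rmult_le_compat_r.
    apply Rlt_le, Rinv_0_lt_compat, pow_lt; lra. exact Hnum. }
  assert (Hzpos : 0 < Cmod z) by lra.
  assert (Hnzn : Cpow z (S n) <> 0%C).
  { intro E. assert (Cmod (Cpow z (S n)) = 0) by (rewrite E; apply Cmod_0).
    rewrite Cmod_pow in H. assert (0 < Cmod z ^ S n) by (apply pow_lt; lra). lra. }
  rewrite Cmod_mult, Cmod_div by exact Hnzn.
  rewrite Cmod_mult, Cmod_Ci, Hrc, Cmod_pow.
  pose proof (powbound n Hn) as PB. fold x in PB.
  assert (Hrx : rho - r = rho * (1 - / x)) by (unfold r; field; lra).
  assert (HZ : rho ^ S n * / 4 <= Cmod z ^ S n).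
  { apply Rle_trans with ((rho - r) ^ S n).
    rewrite Hrx, Rpow_mult_distr. apply Rmult_le_compat_l. apply pow_le; lra. exact PB.
    apply pow_incr; lra. }
  assert (Hrn : 0 < rho ^ n) by (apply pow_lt; lra).
  apply Rle_trans with (B X / r ^ 3 / (rho ^ S n * / 4) * (1 * r)).
  { apply Rmult_le_compat_r. lra. unfold Rdiv. apply Rmult_le_compat.
    apply Cmod_ge_0. apply Rlt_le, Rinv_0_lt_compat, pow_lt; lra. exact HG.
    apply Rinv_le_contravar. simpl. apply Rmult_lt_0_compat; [apply Rmult_lt_0_compat|]; lra. exact HZ. }
  right. unfold r. simpl. field. lra.
Qed.

Theorem proposition3p7 :
  forall (F h0 h1 h2 : C -> C) (C1 C2 b0 b1 b2 phi : R),
  (* f is analytic on Delta and equals sum_n d_n z^n near 0 *)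
  (forall z, inDelta z -> ex_derive F z) ->
  (exists r, 0 < r /\ forall z : C, Cmod z < r ->
       is_series (fun m => Cmult (RtoC (d m)) (Cpow z m)) (F z)) ->
  (* h_0, h_1, h_2 analytic on |z - rho| < rho *)
  (forall z : C, Cmod (Cminus z (RtoC rho)) < rho ->
       ex_derive h0 z /\ ex_derive h1 z /\ ex_derive h2 z) ->
  (* the decomposition of f on Delta /\ {|z - rho| < rho} *)
  (forall z : C, inDelta z -> Cmod (Cminus z (RtoC rho)) < rho ->
     F z = Cplus (Cplus
             (Cdiv (RtoC C1) (Cpow (Cminus z (RtoC rho)) 4))
             (Cdiv (Cmult (RtoC C2) (Lfun z)) (Cpow (Cminus z (RtoC rho)) 4)))
           (Cdiv (Cplus (Cplus (h0 z) (Cmult (h1 z) (Lfun z)))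
                        (Cmult (h2 z) (Cpow (Lfun z) 2)))
                 (Cpow (Cminus z (RtoC rho)) 3))) ->
  (* the constants b_j *)
  686/100 - 271/1000000 <= b0 <= 686/100 + 271/1000000 ->
  285/100 - 320/100000 <= b1 <= 285/100 + 320/100000 ->
  309/1000 - 278/1000000 <= b2 <= 309/1000 + 278/1000000 ->
  (forall z : C, Cmod (Cminus z (RtoC rho)) < 1/8 ->
     Cmod (h0 z) <= b0 /\ Cmod (h1 z) <= b1 /\ Cmod (h2 z) <= b2) ->
  0 < phi < PI ->
  let g := fun z : C =>
    Cminus (F z)
      (Cplus (Cdiv (RtoC C1) (Cpow (Cminus z (RtoC rho)) 4))
             (Cdiv (Cmult (RtoC C2) (Lfun z)) (Cpow (Cminus z (RtoC rho)) 4))) in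
  let B := fun x : R => b0 + b1 * x + b2 * x ^ 2 in
  forall n : nat, (5 <= n)%nat ->
    Cmod (Cmult (Cinv (Cmult (RtoC (2 * PI)) Ci))
                (arc_integral (fun z => Cdiv (g z) (Cpow z (S n))) n phi))
    <= / rho ^ n * (INR n) ^ 2 * (4 / rho ^ 3) * B (PI + ln (INR n)).
Proof.
  intros F h0 h1 h2 C1 C2 b0 b1 b2 phi HF Hser Hh Hdec Hb0 Hb1 Hb2 Hhb Hphi g B n Hn.
  pose proof PI_RGT_0 as HPI. pose proof rho_bounds as Hrho.
  assert (Hx : 5 <= INR n) by (apply (le_INR 5) in Hn; simpl in Hn; lra).
  assert (Hlnx : 0 <= ln (INR n)) by (rewrite <- ln_1; apply ln_le; lra).
  set (M := / rho ^ n * (INR n) ^ 2 * (4 / rho ^ 3) * B (PI + ln (INR n))).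
  assert (HM : 0 <= M).
  { unfold M, B. assert (0 < rho ^ n) by (apply pow_lt; lra).
    assert (0 < rho ^ 3) by (apply pow_lt; lra).
    apply Rmult_le_pos. apply Rmult_le_pos. apply Rmult_le_pos.
    apply Rlt_le, Rinv_0_lt_compat; lra. apply pow_le; lra.
    apply Rlt_le, Rdiv_lt_0_compat; lra.
    assert (0 <= (PI + ln (INR n)) ^ 2) by (apply pow_le; lra). nra. }
  unfold arc_integral. cbv zeta.
  rewrite Cmod_mult.
  assert (Hc : Cmult (RtoC (2 * PI)) Ci <> 0%C).
  { intro E. assert (Cmod (Cmult (RtoC (2 * PI)) Ci) = 0) by (rewrite E; apply Cmod_0).
    rewrite Cmod_mult, Cmod_Ci, Cmod_R, Rabs_pos_eq in H; lra. }
  rewrite Cmod_inv by exact Hc. rewrite Cmod_mult, Cmod_Ci, Cmod_R, Rabs_pos_eq by lra.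
  eapply Rle_trans. apply Rmult_le_compat_l. apply Rlt_le, Rinv_0_lt_compat; lra.
  eapply Rle_trans. apply Cmod_triangle.
  apply Rplus_le_compat.
  - apply CInt_bound. lra. 2: exact HM.
    intros t Ht. exact (pointwise F h0 h1 h2 C1 C2 b0 b1 b2 phi n t Hdec Hhb Hphi Hn (or_intror Ht)).
  - apply CInt_bound. lra. 2: exact HM.
    intros t Ht. exact (pointwise F h0 h1 h2 C1 C2 b0 b1 b2 phi n t Hdec Hhb Hphi Hn (or_introl Ht)).
  - apply Rle_trans with (M * ((PI - phi) / PI)).
    right. field. lra.
    apply Rle_trans with (M * 1). apply Rmult_le_compat_l. lra.
    apply (Rmult_le_reg_r PI). lra. unfold Rdiv. rewrite Rmult_assoc, Rinv_l; lra. lra.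
Qed.
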